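(* For all $1\le a\le n$, $S_a\cdot L(u)=0$, i.e. every coefficient of the formal power series $L(u)$ in $D$ is annihilated by $S_a$.
   Context: Fix $n\ge4$. Let $Q_a(u)$ ($1\le a\le n$, $u\in\mathbb C$) be algebraically independent commuting indeterminates, $\mathcal Q=\mathbb Z[Q_a(u)^{\pm1}]$. Bilinear form of type $D_n$: $(\alpha_a|\alpha_a)=2$, $(\alpha_a|\alpha_{a+1})=(\alpha_{a+1}|\alpha_a)=-1$ for $1\le a\le n-2$, $(\alpha_{n-2}|\alpha_n)=(\alpha_n|\alpha_{n-2})=-1$, all other $(\alpha_a|\alpha_b)=0$ ($a\ne b$). Put $Y_a(u)=Q_a(u-1)/Q_a(u+1)$, $Y_0(u)=1$, $\mathcal Y=\mathbb Z[Y_a(u)^{\pm1}]$. Define $z_a(u)=\frac{Y_a(u+a)}{Y_{a-1}(u+a+1)}$, $z_{\bar a}(u)=\frac{Y_{a-1}(u+2n-a-1)}{Y_a(u+2n-a)}$ for $1\le a\le n-2$; $z_{n-1}(u)=\frac{Y_n(u+n-1)Y_{n-1}(u+n-1)}{Y_{n-2}(u+n)}$, $z_{\overline{n-1}}(u)=\frac{Y_{n-2}(u+n)}{Y_n(u+n+1)Y_{n-1}(u+n+1)}$, $z_n(u)=\frac{Y_n(u+n-1)}{Y_{n-1}(u+n+1)}$, $z_{\bar n}(u)=\frac{Y_{n-1}(u+n-1)}{Y_n(u+n+1)}$. In the ring of formal power series $\sum_{j\ge0}c_j(u)D^j$ ($c_j(u)\in\mathcal Y$, $D\,c(u)=c(u+1)D$)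 define \[ L(u)=(1-z_{\bar1}(u)D^2)\cdots(1-z_{\bar n}(u)D^2)\,(1-z_n(u)z_{\bar n}(u+2)D^4)^{-1}\,(1-z_n(u)D^2)\cdots(1-z_1(u)D^2), \] with $(1-cD^4)^{-1}=\sum_{k\ge0}(cD^4)^k$. Screening: let $A_a(u)=\prod_{b=1}^n\frac{Q_b(u-(\alpha_a|\alpha_b))}{Q_b(u+(\alpha_a|\alpha_b))}$; let $\mathcal S$ be the commutative ring generated over $\mathcal Q$ by symbols $S_a(u)$ subject to $S_a(u+2)=A_a(u+1)S_a(u)$. $S_a:\mathcal Y\to\mathcal S$ is the additive map obeying the Leibniz rule with $S_a\cdot Y_b(u)=\delta_{ab}Y_b(u)S_b(u)$; it acts on power series in $D$ coefficientwise. *)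

(* Defs.v *)
From HB Require Import structures.
From mathcomp Require Import all_boot all_order all_algebra.
From mathcomp Require Import complex.
From mathcomp Require Import Rstruct.
From Stdlib Require Rdefinitions.

Set Implicit Arguments.
Unset Strict Implicit.
Unset Printing Implicit Defensive.

Import Order.TTheory GRing.Theory Num.Theory.
Local Open Scope ring_scope.

Notation CC := (Rdefinitions.R)[i].

Definition shn (u : CC) (k : nat) : CC := u + k%:R.

Definition Dn_edge (n a b : nat) : bool :=
  ((a.+1 == b) && (b <= n.-1)%N) || ((a == (n - 2)%N) && (b == n)).

Definition Dn_form (n a b : nat) : int :=
  if a == b then (2 : int)
  else if Dn_edge n a b || Dn_edge n b a then (-1 : int) else (0 : int).

(* Formal power series  sum_j c_j(u) D^j  with D c(u) = c(u+1) D.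
   A series is given by its coefficient family  j |-> (u |-> c_j(u)). *)
Section Series.
Variable K : comNzRingType.

Definition series := nat -> CC -> K.

Definition sone : series := fun j _ => (j == 0%N)%:R.

Definition smul (f g : series) : series :=
  fun j u => \sum_(i < j.+1) f i u * g (j - i)%N (shn u i).

Definition sfac2 (c : CC -> K) : series :=
  fun j u => if j == 0%N then 1 else if j == 2%N then - c u else 0.

(* (1 - c(u) D^4)^{-1} = sum_k (c(u) D^4)^k,
   (c(u) D^4)^k = c(u) c(u+4) ... c(u+4(k-1)) D^{4k}. *)
Definition sgeom4 (c : CC -> K) : series :=
  fun j u => if (4 %| j)%N then \prod_(k < j %/ 4) c (shn u (4 * k)) else 0.
End Series.

(* Y-variables: y b v stands for Y_b(v), yi b v for its inverse
   (meaningful for 1 <= b <= n); Y_0 = 1. *)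
Section ZFunctions.
Variable K : comNzRingType.
Variable n : nat.
Variables y yi : nat -> CC -> K.

Definition Yv (b : nat) (v : CC) : K := if b == 0%N then 1 else y b v.
Definition Yiv (b : nat) (v : CC) : K := if b == 0%N then 1 else yi b v.

Definition zD (a : nat) (u : CC) : K :=
  if (a <= n - 2)%N then Yv a (shn u a) * Yiv a.-1 (shn u a.+1)
  else if a == n.-1 then
    Yv n (shn u n.-1) * Yv n.-1 (shn u n.-1) * Yiv (n - 2) (shn u n)
  else Yv n (shn u n.-1) * Yiv n.-1 (shn u n.+1).

Definition zbD (a : nat) (u : CC) : K :=
  if (a <= n - 2)%N then Yv a.-1 (shn u (2 * n - a - 1)) * Yiv a (shn u (2 * n - a))
  else if a == n.-1 then
    Yv (n - 2) (shn u n) * Yiv n (shn u n.+1) * Yiv n.-1 (shn u n.+1)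
  else Yv n.-1 (shn u n.-1) * Yiv n (shn u n.+1).

(* L(u) = (1 - z_{bar 1} D^2) ... (1 - z_{bar n} D^2)
          (1 - z_n(u) z_{bar n}(u+2) D^4)^{-1}
          (1 - z_n D^2) ... (1 - z_1 D^2) *)
Definition Lright : series K :=
  foldr (fun a acc => smul (sfac2 (zD a)) acc) (@sone K) (rev (iota 1 n)).

Definition Lmid : series K := sgeom4 (fun u => zD n u * zbD n (shn u 2)).

Definition Lseries : series K :=
  foldr (fun a acc => smul (sfac2 (zbD a)) acc) (smul Lmid Lright) (iota 1 n).
End ZFunctions.

(* A_a(v) = prod_b Q_b(v - (a_a|a_b)) / Q_b(v + (a_a|a_b)), evaluated in a
   ring T where Q_b(v) |-> q b v with inverse qi b v. *)
Definition Aroot (T : comNzRingType) (n : nat) (q qi : nat -> CC -> T)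
  (a : nat) (v : CC) : T :=
  \prod_(1 <= b < n.+1)
     (q b (v - (Dn_form n a b)%:~R) * qi b (v + (Dn_form n a b)%:~R)).

(* Main.v *)
Require Import Defs.
From HB Require Import structures.
From mathcomp Require Import all_boot all_order all_algebra.
From mathcomp Require Import complex Rstruct.
From mathcomp Require Import zify ring.
From Stdlib Require Import FunctionalExtensionality.
Import GRing.Theory.
Local Open Scope ring_scope.

Lemma shnA (u : CC) a b : shn (shn u a) b = shn u (a + b)%N.
Proof. by rewrite /shn natrD addrA. Qed.
Lemma shn0 (u : CC) : shn u 0 = u.
Proof. by rewrite /shn addr0. Qed.

Section SeriesLemmas.
Variable K : comNzRingType.

Lemma tri_exchange (G : nat -> nat -> K) N :
  \sum_(0 <= i < N) \sum_(0 <= k < i.+1) G k i =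
  \sum_(0 <= k < N) \sum_(0 <= m < N - k) G k (k + m)%N.
Proof.
elim: N => [|N IH]; first by rewrite !big_geq.
rewrite big_nat_recr //= IH [in RHS]big_nat_recr //= subSnn big_nat1 /=.
have E : \sum_(0 <= i < N) \sum_(0 <= m < N.+1 - i) G i (i + m)%N =
   \sum_(0<=i<N) (\sum_(0 <= m < N - i) G i (i + m)%N + G i N).
  apply: eq_big_nat => k /andP[_ Hk]; rewrite subSn ?(ltnW Hk) // big_nat_recr //=.
  by rewrite subnKC // ltnW.
rewrite E big_split /= big_nat_recr //=.
by rewrite addrA addn0.
Qed.

Lemma smul_assoc (f g h : series K) j u :
  smul (smul f g) h j u = smul f (smul g h) j u.
Proof.
rewrite /smul.
pose G k i := f k u * g (i - k)%N (shn u k) * h (j - i)%N (shn u i).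
transitivity (\sum_(0 <= i < j.+1) \sum_(0 <= k < i.+1) G k i).
  rewrite big_mkord; apply: eq_bigr => i _; rewrite big_mkord mulr_suml.
  by apply: eq_bigr.
rewrite tri_exchange big_mkord; apply: eq_bigr => k _.
rewrite subSn; last by rewrite -ltnS.
rewrite big_mkord mulr_sumr; apply: eq_bigr => m _.
rewrite /G mulrA shnA; congr (_ * _ * h _ _).
  by rewrite addKn.
by rewrite subnDA.
Qed.

Lemma smul_assocE (f g h : series K) :
  smul (smul f g) h = smul f (smul g h).
Proof. do 2 (apply: functional_extensionality => ?); exact: smul_assoc. Qed.


Lemma smul_sfac2_l (c : CC -> K) (f : series K) j u :
  smul (sfac2 c) f j u =
  f j u - (if (2 <= j)%N then c u * f (j - 2)%N (shn u 2) else 0).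
Proof.
rewrite /smul; case: j => [|[|j]].
- by rewrite big_ord_recl big_ord0 /sfac2 /= mul1r shn0 subr0 addr0.
- rewrite !big_ord_recl big_ord0 /sfac2 /= mul1r mul0r shn0 subr0 !addr0.
  by [].
rewrite !big_ord_recl /sfac2 /= mul1r mul0r shn0 add0r addrA.
rewrite big1 ?addr0 ?mulNr //.
by move=> i _ /=; rewrite mul0r.
Qed.

Lemma smul_sfac2_r (c : CC -> K) (f : series K) j u :
  smul f (sfac2 c) j u =
  f j u - (if (2 <= j)%N then f (j - 2)%N u * c (shn u (j - 2)%N) else 0).
Proof.
rewrite /smul; case: j => [|[|j]].
- by rewrite big_ord_recl big_ord0 /sfac2 /= mulr1 subr0 addr0.
- by rewrite !big_ord_recr big_ord0 /sfac2 /= mulr0 mulr1 subr0 !add0r.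
rewrite !big_ord_recr /sfac2 /= subnn.
have -> : (j.+2 - j.+1 = 1)%N by rewrite subSS subSnn.
have -> : (j.+2 - j = 2)%N by rewrite -addn2 addKn.
have -> : (j.+2 - 2 = j)%N by rewrite -addn2 addnK.
rewrite /= mulr0 addr0 mulr1 mulrN big1 ?add0r; first by rewrite addrC.
move=> i _ /=; have Hi := ltn_ord i.
have -> : (j.+2 - i == 0)%N = false by apply/negbTE; lia.
have -> : (j.+2 - i == 2)%N = false by apply/negbTE; lia.
by rewrite mulr0.
Qed.


Definition Pw (w x : CC -> K) k u :=
  \prod_(i < k) (w (shn u (4 * i)%N) * x (shn (shn u (4 * i)%N) 2)).

Lemma Pw_shift (w x : CC -> K) k u :
  Pw w x k u * w (shn u (4 * k)%N) = w u * Pw x w k (shn u 2).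
Proof.
elim: k => [|k IH]; first by rewrite /Pw !big_ord0 mul1r mulr1 shn0.
rewrite /Pw !big_ord_recr /= -/(Pw w x k u) -/(Pw x w k (shn u 2)).
rewrite !mulrA IH -!mulrA !shnA.
congr (_ * (_ * (x (shn u _) * w (shn u _)))); lia.
Qed.

Lemma dvd4 k r : (r < 4)%N -> (4 %| 4 * k + r)%N = (r == 0)%N.
Proof.
move=> Hr; rewrite dvdn_addr ?dvdn_mulr //.
by case: r Hr => [|[|[|[|r]]]].
Qed.

Lemma sgeom4_4k (c : CC -> K) k u :
  sgeom4 c (4 * k)%N u = \prod_(i < k) c (shn u (4 * i)%N).
Proof. by rewrite /sgeom4 dvdn_mulr // mulKn. Qed.

Lemma sgeom4_nd (c : CC -> K) k r u : (0 < r < 4)%N ->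
  sgeom4 c (4 * k + r)%N u = 0.
Proof. by move=> /andP[H1 H2]; rewrite /sgeom4 dvd4 //; case: r H1 H2. Qed.

Lemma j4_cases j : exists k, [\/ j = (4 * k)%N, j = (4 * k + 1)%N, j = (4 * k + 2)%N | j = (4 * k + 3)%N].
Proof.
have := divn_eq j 4; have := ltn_mod j 4.
move: (j %/ 4)%N (j %% 4)%N => k r Hr ->; exists k; rewrite mulnC.
case: r Hr => [|[|[|[|r]]]] // _.
- by apply: Or41; rewrite addn0.
- exact: Or42.
- exact: Or43.
- exact: Or44.
Qed.

Lemma smulGW_4k (w x : CC -> K) k u :
  smul (sgeom4 (fun v => w v * x (shn v 2))) (sfac2 w) (4 * k)%N u = Pw w x k u.
Proof.
rewrite smul_sfac2_r sgeom4_4k; case: k => [|k] /=; first by rewrite subr0.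
have -> : (4 * k.+1 - 2 = 4 * k + 2)%N by lia.
by rewrite sgeom4_nd // mul0r if_same subr0.
Qed.

Lemma smulGW_4k2 (w x : CC -> K) k u :
  smul (sgeom4 (fun v => w v * x (shn v 2))) (sfac2 w) (4 * k + 2)%N u
  = - (Pw w x k u * w (shn u (4 * k)%N)).
Proof.
rewrite smul_sfac2_r sgeom4_nd //.
have -> : (2 <= 4 * k + 2)%N by lia.
by rewrite addnK sgeom4_4k add0r.
Qed.

Lemma smulGW_odd (w x : CC -> K) k r u : (r == 1)%N || (r == 3)%N ->
  smul (sgeom4 (fun v => w v * x (shn v 2))) (sfac2 w) (4 * k + r)%N u = 0.
Proof.
move=> Hr; rewrite smul_sfac2_r sgeom4_nd; last by case/orP: Hr => /eqP ->.
case/orP: Hr => /eqP ->.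
  case: k => [|k]; first by rewrite subr0.
  have -> : (4 * k.+1 + 1 - 2 = 4 * k + 3)%N by lia.
  by rewrite /= sgeom4_nd // mul0r if_same subr0.
have -> : (4 * k + 3 - 2 = 4 * k + 1)%N by lia.
by rewrite /= sgeom4_nd // mul0r if_same subr0.
Qed.


Lemma Pw_succ (w x : CC -> K) k u :
  Pw w x k.+1 u = w u * (Pw x w k (shn u 2) * x (shn (shn u 2) (4 * k)%N)).
Proof.
rewrite /Pw big_ord_recr /= -/(Pw w x k u) -/(Pw x w k (shn u 2)).
rewrite mulrA Pw_shift -mulrA; congr (_ * (_ * x _)).
by rewrite !shnA addnC.
Qed.

Lemma swap_mid (w x : CC -> K) j u :
  smul (sfac2 x) (smul (sgeom4 (fun v => w v * x (shn v 2))) (sfac2 w)) j u =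
  smul (sfac2 w) (smul (sgeom4 (fun v => x v * w (shn v 2))) (sfac2 x)) j u.
Proof.
rewrite !smul_sfac2_l.
have [k [->|->|->|->]] := j4_cases j.
- case: k => [|k]; first by rewrite !smulGW_4k /= /Pw !big_ord0.
  have -> : (2 <= 4 * k.+1)%N by lia.
  have -> : (4 * k.+1 - 2 = 4 * k + 2)%N by lia.
  rewrite !smulGW_4k !smulGW_4k2 !mulrN !opprK.
  rewrite (Pw_succ w x k u) (Pw_succ x w k u).
  by rewrite addrC.
- case: k => [|k]; first by rewrite !smulGW_odd.
  have -> : (2 <= 4 * k.+1 + 1)%N by lia.
  have -> : (4 * k.+1 + 1 - 2 = 4 * k + 3)%N by lia.
  by rewrite !smulGW_odd // !mulr0.
- have -> : (2 <= 4 * k + 2)%N by lia.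
  rewrite addnK !smulGW_4k !smulGW_4k2 !Pw_shift.
  by rewrite addrC.
- have -> : (2 <= 4 * k + 3)%N by lia.
  have -> : (4 * k + 3 - 2 = 4 * k + 1)%N by lia.
  by rewrite !smulGW_odd // !mulr0.
Qed.

Lemma swap_midE (w x : CC -> K) :
  smul (sfac2 x) (smul (sgeom4 (fun v => w v * x (shn v 2))) (sfac2 w)) =
  smul (sfac2 w) (smul (sgeom4 (fun v => x v * w (shn v 2))) (sfac2 x)).
Proof. do 2 (apply: functional_extensionality => ?); exact: swap_mid. Qed.

End SeriesLemmas.



Lemma prod_sparse (R : comNzRingType) (F : nat -> R) lo hi (S : seq nat) :
  uniq S -> all (fun b => lo <= b < hi)%N S ->
  (forall b, (lo <= b < hi)%N -> b \notin S -> F b = 1) ->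
  \prod_(lo <= b < hi) F b = \prod_(b <- S) F b.
Proof.
move=> US AS HF; rewrite (bigID (mem S)) /= [X in _ * X]big1_seq ?mulr1.
  rewrite -big_filter; apply: perm_big; apply: uniq_perm => //.
    by rewrite filter_uniq // iota_uniq.
  move=> b; rewrite mem_filter mem_index_iota.
  apply/andP/idP => [[] //|Hb]; split=> //.
  by move/allP: AS => /(_ b Hb).
by move=> b /andP[Hb Hi]; apply: HF => //; rewrite -mem_index_iota.
Qed.


Lemma iota_split1 n a : (1 <= a)%N -> (a.+1 <= n)%N ->
  iota 1 n = iota 1 a.-1 ++ a :: a.+1 :: iota a.+2 (n - a.+1).
Proof.
move=> H1 H2; have E : n = (a.-1 + (n - a.-1))%N by lia.
rewrite {1}E iotaD; congr (_ ++ _).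
have -> : (n - a.-1 = (n - a.+1).+2)%N by lia.
by have -> : (1 + a.-1 = a)%N by lia.
Qed.

Lemma rev_split (s1 s3 : seq nat) x z :
  rev (s1 ++ x :: z :: s3) = rev s3 ++ z :: x :: rev s1.
Proof. by rewrite rev_cat !rev_cons -!cats1 -!catA. Qed.

Lemma iota_split2 n : (2 <= n)%N ->
  iota 1 n = iota 1 (n - 2) ++ [:: n.-1; n].
Proof.
move=> H; have E : n = ((n - 2) + 2)%N by lia.
rewrite {1}E iotaD /=.
have -> : (1 + (n - 2) = n.-1)%N by lia.
by have -> : n.-1.+1 = n by lia.
Qed.

Lemma rev_split2 (s1 : seq nat) x z : rev (s1 ++ [:: x; z]) = z :: x :: rev s1.
Proof. by rewrite rev_cat. Qed.

Section Main.
Variables (n : nat) (Hn : (4 <= n)%N).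
Variables (Yr : comNzRingType) (y yi : nat -> CC -> Yr).
Hypothesis Hy : forall b v, (1 <= b <= n)%N -> y b v * yi b v = 1.
Variables (T : comNzRingType) (q qi : nat -> CC -> T).
Hypothesis Hq : forall b v, (1 <= b <= n)%N -> q b v * qi b v = 1.
Variable phi : {rmorphism Yr -> T}.
Hypothesis Hphi : forall b v, (1 <= b <= n)%N -> phi (y b v) = q b (v - 1) * qi b (v + 1).
Variables (a : nat) (Ha : (1 <= a <= n)%N).
Variable s : CC -> T.
Hypothesis Hs : forall v, s (v + 2) = Aroot n q qi a (v + 1) * s v.
Variable Sa : Yr -> T.
Hypothesis HSadd : forall x x', Sa (x + x') = Sa x + Sa x'.
Hypothesis HSleib : forall x x', Sa (x * x') = phi x * Sa x' + phi x' * Sa x.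
Hypothesis HSgen : forall b v, (1 <= b <= n)%N ->
     Sa (y b v) = if b == a then phi (y b v) * s v else 0.

Lemma Sa0 : Sa 0 = 0.
Proof. have H := HSadd 0 0; rewrite addr0 in H. by apply: (addrI (Sa 0)); rewrite addr0 -H. Qed.

Lemma Sa1 : Sa 1 = 0.
Proof.
have H := HSleib 1 1; rewrite mulr1 rmorph1 !mul1r in H.
by apply: (addrI (Sa 1)); rewrite addr0 -H.
Qed.

Lemma SaN x : Sa (- x) = - Sa x.
Proof. by apply/eqP; rewrite -subr_eq0 opprK addrC -HSadd addrN Sa0. Qed.

Lemma Sa_sum I r (P : pred I) (F : I -> Yr) :
  Sa (\sum_(i <- r | P i) F i) = \sum_(i <- r | P i) Sa (F i).
Proof. exact: (big_morph Sa HSadd Sa0). Qed.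

Definition killed (f : series Yr) := forall j u, Sa (f j u) = 0.

Lemma Sa_smul (f g : series Yr) j u :
  Sa (smul f g j u) =
  \sum_(i < j.+1) (phi (f i u) * Sa (g (j - i)%N (shn u i)) +
                   phi (g (j - i)%N (shn u i)) * Sa (f i u)).
Proof. by rewrite /smul Sa_sum; apply: eq_bigr => i _; rewrite HSleib. Qed.

Lemma killed_smul f g : killed f -> killed g -> killed (smul f g).
Proof.
move=> Kf Kg j u; rewrite Sa_smul big1 // => i _.
by rewrite Kf Kg !mulr0 addr0.
Qed.

Lemma killed_assoc f g h : killed (smul f g) -> killed h -> killed (smul f (smul g h)).
Proof. by move=> K1 K2; rewrite -smul_assocE; apply: killed_smul. Qed.

Lemma killed_sone : killed (@sone Yr).
Proof. by move=> j u; rewrite /sone; case: (j == 0%N); rewrite ?Sa1 ?Sa0. Qed.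

Lemma killed_sfac2 c : (forall u, Sa (c u) = 0) -> killed (sfac2 c).
Proof.
move=> Hc j u; rewrite /sfac2; case: (j == 0%N); first exact: Sa1.
by case: (j == 2%N); rewrite ?SaN ?Hc ?oppr0 ?Sa0.
Qed.

Lemma killed_sgeom4 c : (forall u, Sa (c u) = 0) -> killed (sgeom4 c).
Proof.
move=> Hc j u; rewrite /sgeom4; case: (4 %| j)%N; last exact: Sa0.
apply: (big_rec (fun x => Sa x = 0)); first exact: Sa1.
by move=> i x _ Hx; rewrite HSleib Hx Hc !mulr0 addr0.
Qed.

Lemma killed_pair c1 c2 :
  (forall u, Sa (c1 u + c2 u) = 0) -> (forall u, Sa (c1 u * c2 (shn u 2)) = 0) ->
  killed (smul (sfac2 c1) (sfac2 c2)).
Proof.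
move=> H1 H2 j u; rewrite smul_sfac2_l /sfac2.
case: j => [|[|[|[|[|j]]]]] /=.
- by rewrite subr0 Sa1.
- by rewrite subr0 Sa0.
- by rewrite mulr1 -opprD SaN addrC H1 oppr0.
- by rewrite mulr0 subr0 Sa0.
- by rewrite mulrN opprK add0r H2.
- by rewrite mulr0 subr0 Sa0.
Qed.

Lemma killed_foldr (c : nat -> CC -> Yr) X sq :
  killed X -> (forall b, b \in sq -> forall u, Sa (c b u) = 0) ->
  killed (foldr (fun b acc => smul (sfac2 (c b)) acc) X sq).
Proof.
move=> KX; elim: sq => [|b sq IH] Hc //=.
apply: killed_smul; first by apply: killed_sfac2; apply: Hc; rewrite inE eqxx.
by apply: IH => b' Hb'; apply: Hc; rewrite inE Hb' orbT.
Qed.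


Definition dl b v := if b == a then s v else 0.
Definition SL x d := Sa x = phi x * d.

Lemma dl_ne b v : b != a -> dl b v = 0.
Proof. by rewrite /dl => /negbTE ->. Qed.
Lemma dl_eq v : dl a v = s v.
Proof. by rewrite /dl eqxx. Qed.

Lemma phi_yy b v : (1 <= b <= n)%N -> phi (y b v) * phi (yi b v) = 1.
Proof. by move=> Hb; rewrite -rmorphM Hy // rmorph1. Qed.

Lemma SL_y b v : (1 <= b <= n)%N -> SL (y b v) (dl b v).
Proof. by move=> Hb; rewrite /SL HSgen // /dl; case: (b == a); rewrite ?mulr0. Qed.

Lemma SL_yi b v : (1 <= b <= n)%N -> SL (yi b v) (- dl b v).
Proof.
move=> Hb; rewrite /SL.
have H0 := HSleib (y b v) (yi b v); rewrite Hy // Sa1 (SL_y b v Hb) in H0.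
have E := phi_yy b v Hb.
rewrite -[Sa _]mul1r -E mulrC mulrA [Sa _ * _]mulrC.
have -> : phi (y b v) * Sa (yi b v) = - (phi (yi b v) * (phi (y b v) * dl b v)).
  by apply/eqP; rewrite -subr_eq0 opprK -H0.
transitivity (- (phi (yi b v) * dl b v * (phi (y b v) * phi (yi b v)))); first ring.
by rewrite E mulr1 mulrN.
Qed.

Lemma SL_1 : SL 1 0.
Proof. by rewrite /SL Sa1 mulr0. Qed.

Lemma SL_Yv b v : (b <= n)%N -> SL (Yv y b v) (dl b v).
Proof.
move=> Hb; rewrite /Yv; case: eqP => [->|/eqP b0].
  rewrite dl_ne; [exact: SL_1 | apply/eqP; lia].
by apply: SL_y; lia.
Qed.

Lemma SL_Yiv b v : (b <= n)%N -> SL (Yiv yi b v) (- dl b v).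
Proof.
move=> Hb; rewrite /Yiv; case: eqP => [->|/eqP b0].
  rewrite dl_ne ?oppr0; [exact: SL_1 | apply/eqP; lia].
by apply: SL_yi; lia.
Qed.

Lemma SL_mul x x' d d' : SL x d -> SL x' d' -> SL (x * x') (d + d').
Proof.
rewrite /SL => H1 H2; rewrite HSleib H1 H2 rmorphM; ring.
Qed.

Lemma SL_add x x' d d' : SL x d -> SL x' d' -> Sa (x + x') = phi x * d + phi x' * d'.
Proof. by rewrite /SL HSadd => -> ->. Qed.

Lemma zD_lo b u : (b <= n - 2)%N ->
  zD n y yi b u = Yv y b (shn u b) * Yiv yi b.-1 (shn u b.+1).
Proof. by move=> Hb; rewrite /zD Hb. Qed.
Lemma zD_n1 u :
  zD n y yi n.-1 u = Yv y n (shn u n.-1) * Yv y n.-1 (shn u n.-1) * Yiv yi (n - 2) (shn u n).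
Proof. rewrite /zD ifF ?eqxx //; apply/negbTE; lia. Qed.
Lemma zD_n u : zD n y yi n u = Yv y n (shn u n.-1) * Yiv yi n.-1 (shn u n.+1).
Proof. rewrite /zD ifF ?ifF //; apply/negbTE; lia. Qed.
Lemma zbD_lo b u : (b <= n - 2)%N ->
  zbD n y yi b u = Yv y b.-1 (shn u (2 * n - b - 1)) * Yiv yi b (shn u (2 * n - b)).
Proof. by move=> Hb; rewrite /zbD Hb. Qed.
Lemma zbD_n1 u :
  zbD n y yi n.-1 u = Yv y (n - 2) (shn u n) * Yiv yi n (shn u n.+1) * Yiv yi n.-1 (shn u n.+1).
Proof. rewrite /zbD ifF ?eqxx //; apply/negbTE; lia. Qed.
Lemma zbD_n u : zbD n y yi n u = Yv y n.-1 (shn u n.-1) * Yiv yi n (shn u n.+1).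
Proof. rewrite /zbD ifF ?ifF //; apply/negbTE; lia. Qed.


Definition tb v b : Yr :=
  if a == b then y b (v - 1) * y b (v + 1)
  else if Dn_edge n a b || Dn_edge n b a then yi b v else 1.

Lemma phi_yi b v : (1 <= b <= n)%N -> phi (yi b v) = q b (v + 1) * qi b (v - 1).
Proof.
move=> Hb.
have h1 : (q b (v - 1) * qi b (v + 1)) * (q b (v + 1) * qi b (v - 1)) = 1.
  transitivity ((q b (v - 1) * qi b (v - 1)) * (q b (v + 1) * qi b (v + 1))); first ring.
  by rewrite !Hq // mulr1.
have h2 := phi_yy b v Hb; rewrite Hphi // in h2.
transitivity ((q b (v + 1) * qi b (v - 1)) * ((q b (v - 1) * qi b (v + 1)) * phi (yi b v))).
  by rewrite mulrA [_ * (q b (v - 1) * _)]mulrC h1 mul1r.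
by rewrite h2 mulr1.
Qed.

Lemma Aroot_prod v : Aroot n q qi a v = phi (\prod_(1 <= b < n.+1) tb v b).
Proof.
rewrite /Aroot rmorph_prod; apply: eq_big_nat => b /andP[H1 H2].
have Hb : (1 <= b <= n)%N by lia.
rewrite /Dn_form /tb; case: (a == b).
  rewrite rmorphM !Hphi //.
  have -> : v - 1 - 1 = v - ((2 : int)%:~R : CC) by rewrite /=; ring.
  have -> : v + 1 + 1 = v + ((2 : int)%:~R : CC) by rewrite /=; ring.
  have -> : v - 1 + 1 = v by ring.
  have -> : v + 1 - 1 = v by ring.
  transitivity (q b (v - (2 : int)%:~R) * qi b (v + (2 : int)%:~R) * (q b v * qi b v)).
    by rewrite Hq // mulr1.
  ring.
case: (_ || _).
  rewrite phi_yi //.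
  have -> : v - ((-1 : int)%:~R : CC) = v + 1 by rewrite /=; ring.
  by have -> : v + ((-1 : int)%:~R : CC) = v - 1 by rewrite /=; ring.
by rewrite rmorph1 /= subr0 addr0 Hq.
Qed.


Lemma Aroot_S v S : uniq S -> all (fun b => 1 <= b <= n)%N S ->
  (forall b, (1 <= b <= n)%N -> b \notin S ->
     (a == b) = false /\ (Dn_edge n a b || Dn_edge n b a) = false) ->
  Aroot n q qi a v = phi (\prod_(b <- S) tb v b).
Proof.
move=> US AS H; rewrite Aroot_prod; congr (phi _); apply: prod_sparse => //.
move=> b Hb HbS; rewrite /tb; have [-> ->] := H b ltac:(lia) HbS; done.
Qed.

Lemma tb_a v : tb v a = y a (v - 1) * y a (v + 1).
Proof. by rewrite /tb eqxx. Qed.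
Lemma tb_nb v b : (a == b) = false -> (Dn_edge n a b || Dn_edge n b a) -> tb v b = yi b v.
Proof. by move=> H1 H2; rewrite /tb H1 H2. Qed.

Lemma Aroot_i v : (a <= n - 3)%N ->
  Aroot n q qi a v = phi (y a (v - 1) * y a (v + 1) * Yiv yi a.-1 v * yi a.+1 v).
Proof.
move=> Ha3; have [a1|a2] := eqVneq a 1%N.
  rewrite (@Aroot_S v [:: a; a.+1]).
  - rewrite !big_cons big_nil tb_a (@tb_nb v a.+1); first last.
    + by rewrite /Dn_edge; lia.
    + by apply/negbTE; lia.
    by congr (phi _); rewrite /Yiv a1 /=; ring.
  - by rewrite /= inE; lia.
  - by rewrite /=; lia.
  - move=> b Hb; rewrite !inE => HbS; split; apply/negbTE; rewrite /Dn_edge; lia.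
rewrite (@Aroot_S v [:: a; a.-1; a.+1]).
- rewrite !big_cons big_nil tb_a (@tb_nb v a.+1) ?(@tb_nb v a.-1); first last.
  + by rewrite /Dn_edge; lia.
  + by apply/negbTE; lia.
  + by rewrite /Dn_edge; lia.
  + by apply/negbTE; lia.
  rewrite /Yiv ifF; last by apply/negbTE; lia.
  by rewrite mulr1 !mulrA.
- by rewrite /= !inE; lia.
- by rewrite /=; lia.
- move=> b Hb; rewrite !inE => HbS; split; apply/negbTE; rewrite /Dn_edge; lia.
Qed.


Lemma Aroot_ii v : a = (n - 2)%N ->
  Aroot n q qi a v = phi (y a (v - 1) * y a (v + 1) * yi a.-1 v * yi a.+1 v * yi n v).
Proof.
move=> Ha2.
rewrite (@Aroot_S v [:: a; a.-1; a.+1; n]).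
- rewrite !big_cons big_nil tb_a (@tb_nb v n) ?(@tb_nb v a.+1) ?(@tb_nb v a.-1); first last.
  + by rewrite /Dn_edge; lia.
  + by apply/negbTE; lia.
  + by rewrite /Dn_edge; lia.
  + by apply/negbTE; lia.
  + by rewrite /Dn_edge; lia.
  + by apply/negbTE; lia.
  by congr (phi _); ring.
- by rewrite /= !inE; lia.
- by rewrite /=; lia.
- move=> b Hb; rewrite !inE => HbS; split; apply/negbTE; rewrite /Dn_edge; lia.
Qed.

Lemma Aroot_iii v : (a = n - 1)%N \/ a = n ->
  Aroot n q qi a v = phi (y a (v - 1) * y a (v + 1) * yi (n - 2)%N v).
Proof.
move=> Ha2.
rewrite (@Aroot_S v [:: a; (n - 2)%N]).
- rewrite !big_cons big_nil tb_a (@tb_nb v (n - 2)%N); first last.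
  + by rewrite /Dn_edge; lia.
  + by apply/negbTE; lia.
  by congr (phi _); ring.
- by rewrite /= !inE; lia.
- by rewrite /=; lia.
- move=> b Hb; rewrite !inE => HbS; split; apply/negbTE; rewrite /Dn_edge; lia.
Qed.


Lemma SL_zD_lo b u : (1 <= b)%N -> (b <= n - 2)%N ->
  SL (zD n y yi b u) (dl b (shn u b) + - dl b.-1 (shn u b.+1)).
Proof.
move=> H1 H2; rewrite zD_lo //; apply: SL_mul; [apply: SL_Yv | apply: SL_Yiv]; lia.
Qed.
Lemma SL_zD_n1 u :
  SL (zD n y yi n.-1 u) (dl n (shn u n.-1) + dl n.-1 (shn u n.-1) + - dl (n - 2)%N (shn u n)).
Proof.
rewrite zD_n1; apply: SL_mul; [apply: SL_mul|]; first [apply: SL_Yv | apply: SL_Yiv]; lia.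
Qed.
Lemma SL_zD_n u :
  SL (zD n y yi n u) (dl n (shn u n.-1) + - dl n.-1 (shn u n.+1)).
Proof.
rewrite zD_n; apply: SL_mul; first [apply: SL_Yv | apply: SL_Yiv]; lia.
Qed.
Lemma SL_zbD_lo b u : (1 <= b)%N -> (b <= n - 2)%N ->
  SL (zbD n y yi b u) (dl b.-1 (shn u (2 * n - b - 1)%N) + - dl b (shn u (2 * n - b)%N)).
Proof.
move=> H1 H2; rewrite zbD_lo //; apply: SL_mul; [apply: SL_Yv | apply: SL_Yiv]; lia.
Qed.
Lemma SL_zbD_n1 u :
  SL (zbD n y yi n.-1 u) (dl (n - 2)%N (shn u n) + - dl n (shn u n.+1) + - dl n.-1 (shn u n.+1)).
Proof.
rewrite zbD_n1; apply: SL_mul; [apply: SL_mul|]; first [apply: SL_Yv | apply: SL_Yiv]; lia.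
Qed.
Lemma SL_zbD_n u :
  SL (zbD n y yi n u) (dl n.-1 (shn u n.-1) + - dl n (shn u n.+1)).
Proof.
rewrite zbD_n; apply: SL_mul; first [apply: SL_Yv | apply: SL_Yiv]; lia.
Qed.

Lemma SL0 x : SL x 0 -> Sa x = 0.
Proof. by rewrite /SL mulr0. Qed.

Lemma SL_ext x d d' : d = d' -> SL x d -> SL x d'.
Proof. by move=> ->. Qed.

Lemma prod_cancel c1 c2 d1 d2 : SL c1 d1 -> SL c2 d2 -> d1 + d2 = 0 -> Sa (c1 * c2) = 0.
Proof. by move=> H1 H2 E; apply: SL0; rewrite -E; apply: SL_mul. Qed.

Lemma sum_cancel c1 c2 d1 d2 W M :
  SL c1 d1 -> SL c2 d2 -> d1 = - s (W + 2) -> d2 = s W ->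
  Aroot n q qi a (W + 1) = phi M -> c1 * M = c2 -> Sa (c1 + c2) = 0.
Proof.
move=> H1 H2 E1 E2 EA EM; rewrite (SL_add _ _ _ _ H1 H2) E1 E2 Hs EA.
have E : phi c1 * phi M = phi c2 by rewrite -rmorphM EM.
by rewrite mulrN mulrA E addNr.
Qed.

Lemma shn_add1 u k : shn u k + 1 = shn u k.+1.
Proof. by rewrite /shn -addrA -(natrD _ k 1) addn1. Qed.
Lemma shn_add2 u k : shn u k + 2 = shn u k.+2.
Proof. by rewrite /shn -addrA -(natrD _ k 2) addn2. Qed.
Lemma shn_sub1 u k : shn u k.+1 - 1 = shn u k.
Proof. by rewrite -shn_add1 addrK. Qed.


Lemma Yv_y b v : (b != 0)%N -> Yv y b v = y b v.
Proof. by rewrite /Yv => /negbTE ->. Qed.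
Lemma Yiv_yi b v : (b != 0)%N -> Yiv yi b v = yi b v.
Proof. by rewrite /Yiv => /negbTE ->. Qed.

Lemma blockF_i : (a <= n - 3)%N ->
  killed (smul (sfac2 (zD n y yi a.+1)) (sfac2 (zD n y yi a))).
Proof.
move=> Ha3; apply: killed_pair => u.
- apply: (@sum_cancel _ _ _ _ (shn u a)
     (y a (shn u a) * y a (shn u a.+2) * Yiv yi a.-1 (shn u a.+1) * yi a.+1 (shn u a.+1))).
  + by apply: SL_zD_lo; lia.
  + by apply: SL_zD_lo; lia.
  + by rewrite dl_ne ?add0r /= ?dl_eq ?shn_add2 //; lia.
  + by rewrite dl_eq (@dl_ne a.-1) ?oppr0 ?addr0 //; lia.
  + by rewrite Aroot_i // shn_add1 shn_sub1 shn_add1.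
  + have a0 : (a != 0)%N by lia.
    rewrite !zD_lo; try lia.
    rewrite /= (Yv_y a.+1) // (Yv_y _ _ a0) (Yiv_yi _ _ a0).
    transitivity (y a (shn u a) * Yiv yi a.-1 (shn u a.+1) *
       (y a.+1 (shn u a.+1) * yi a.+1 (shn u a.+1)) * (y a (shn u a.+2) * yi a (shn u a.+2))).
      ring.
    by rewrite !Hy ?mulr1 //; lia.
- apply: prod_cancel; [apply: SL_zD_lo | apply: SL_zD_lo |]; try lia.
  rewrite (@dl_ne a.+1) ?(@dl_ne a.-1) /= ?dl_eq ?shnA; try lia.
  have -> : (2 + a = a.+2)%N by lia.
  by rewrite oppr0 add0r addr0 addNr.
Qed.


Lemma Yv_Yiv b v : (b <= n)%N -> Yv y b v * Yiv yi b v = 1.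
Proof. by rewrite /Yv /Yiv; case: eqP => [_|/eqP b0 Hb]; rewrite ?mulr1 ?Hy //; lia. Qed.

Lemma blockFb_i : (a <= n - 3)%N ->
  killed (smul (sfac2 (zbD n y yi a)) (sfac2 (zbD n y yi a.+1))).
Proof.
move=> Ha3; apply: killed_pair => u.
- pose X := (2 * n - a.+1 - 1)%N.
  have e1 : (2 * n - a - 1 = X.+1)%N by rewrite /X; lia.
  have e2 : (2 * n - a = X.+2)%N by rewrite /X; lia.
  have e3 : (2 * n - a.+1 = X.+1)%N by rewrite /X; lia.
  apply: (@sum_cancel _ _ _ _ (shn u X)
     (y a (shn u X) * y a (shn u X.+2) * Yiv yi a.-1 (shn u X.+1) * yi a.+1 (shn u X.+1))).
  + by apply: SL_zbD_lo; lia.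
  + by apply: SL_zbD_lo; lia.
  + by rewrite (@dl_ne a.-1) ?add0r ?dl_eq ?shn_add2 ?e2 //; lia.
  + by rewrite dl_eq (@dl_ne a.+1) ?oppr0 ?addr0 //; lia.
  + by rewrite Aroot_i // shn_add1 shn_sub1 shn_add1.
  + have a0 : (a != 0)%N by lia.
    rewrite !zbD_lo; try lia.
    rewrite -/X e1 e2 e3 /= (Yiv_yi a.+1) // (Yv_y _ _ a0) (Yiv_yi _ _ a0).
    transitivity (y a (shn u X) * yi a.+1 (shn u X.+1) *
       (Yv y a.-1 (shn u X.+1) * Yiv yi a.-1 (shn u X.+1)) * (y a (shn u X.+2) * yi a (shn u X.+2))).
      ring.
    by rewrite Hy ?Yv_Yiv ?mulr1 //; lia.
- apply: prod_cancel; [apply: SL_zbD_lo | apply: SL_zbD_lo |]; try lia.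
  rewrite (@dl_ne a.+1) ?(@dl_ne a.-1) /= ?dl_eq ?shnA; try lia.
  have -> : (2 + (2 * n - a.+1 - 1) = 2 * n - a)%N by lia.
  by rewrite oppr0 add0r addr0 addNr.
Qed.


Lemma shnE u k k' : k = k' -> shn u k = shn u k'.
Proof. by move=> ->. Qed.

Lemma blockF_ii : a = (n - 2)%N ->
  killed (smul (sfac2 (zD n y yi a.+1)) (sfac2 (zD n y yi a))).
Proof.
move=> Ha2; have e1 : a.+1 = n.-1 by lia.
have e2 : (n - 2)%N = a by lia.
have e3 : forall u, shn u n = shn u a.+2 by move=> u; apply: shnE; lia.
rewrite e1; apply: killed_pair => u.
- apply: (@sum_cancel _ _ _ _ (shn u a)
     (y a (shn u a) * y a (shn u a.+2) * yi a.-1 (shn u a.+1) * yi a.+1 (shn u a.+1) * yi n (shn u a.+1))).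
  + exact: SL_zD_n1.
  + by apply: SL_zD_lo; lia.
  + rewrite e2 (dl_ne n) ?(dl_ne n.-1) ?dl_eq ?add0r; try lia.
    by rewrite shn_add2 (e3 u).
  + by rewrite dl_eq (@dl_ne a.-1) ?oppr0 ?addr0 //; lia.
  + by rewrite Aroot_ii // shn_add1 shn_sub1 shn_add1.
  + have a0 : (a != 0)%N by lia.
    rewrite zD_n1 zD_lo; last lia.
    rewrite e2 (e3 u) -e1 (Yv_y n) ?(Yv_y a.+1) ?(Yiv_yi a) ?(Yv_y a) ?(Yiv_yi a.-1); try lia.
    transitivity (y a (shn u a) * yi a.-1 (shn u a.+1) *
       (y n (shn u a.+1) * yi n (shn u a.+1)) * (y a.+1 (shn u a.+1) * yi a.+1 (shn u a.+1))
       * (y a (shn u a.+2) * yi a (shn u a.+2))).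
      ring.
    by rewrite !Hy ?mulr1 //; lia.
- apply: prod_cancel; [apply: SL_zD_n1 | apply: SL_zD_lo |]; try lia.
  rewrite e2 (dl_ne n) ?(dl_ne n.-1) ?(@dl_ne a.-1) ?dl_eq ?shnA; try lia.
  rewrite (e3 u).
  have -> : (2 + a = a.+2)%N by lia.
  by rewrite oppr0 !add0r addr0 addNr.
Qed.


Lemma blockFb_ii : a = (n - 2)%N ->
  killed (smul (sfac2 (zbD n y yi a)) (sfac2 (zbD n y yi a.+1))).
Proof.
move=> Ha2; have e1 : a.+1 = n.-1 by lia.
have e2 : (n - 2)%N = a by lia.
have e4 : (2 * n - a - 1 = n.+1)%N by lia.
have e5 : (2 * n - a = n.+2)%N by lia.
rewrite e1; apply: killed_pair => u.
- apply: (@sum_cancel _ _ _ _ (shn u n)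
     (y a (shn u n) * y a (shn u n.+2) * yi a.-1 (shn u n.+1) * yi a.+1 (shn u n.+1) * yi n (shn u n.+1))).
  + by apply: SL_zbD_lo; lia.
  + exact: SL_zbD_n1.
  + by rewrite (@dl_ne a.-1) ?add0r ?dl_eq ?shn_add2 ?e5 //; lia.
  + by rewrite e2 dl_eq (dl_ne n) ?(dl_ne n.-1) ?oppr0 ?addr0 //; lia.
  + by rewrite Aroot_ii // shn_add1 shn_sub1 shn_add1.
  + have a0 : (a != 0)%N by lia.
    rewrite zbD_n1 zbD_lo; last lia.
    rewrite e2 e4 e5 -e1 (Yiv_yi n) ?(Yiv_yi a.+1) ?(Yiv_yi a) ?(Yv_y a) ?(Yv_y a.-1); try lia.
    transitivity (y a (shn u n) * yi n (shn u n.+1) * yi a.+1 (shn u n.+1) *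
       (y a.-1 (shn u n.+1) * yi a.-1 (shn u n.+1)) * (y a (shn u n.+2) * yi a (shn u n.+2))).
      ring.
    by rewrite !Hy ?mulr1 //; lia.
- apply: prod_cancel; [apply: SL_zbD_lo | apply: SL_zbD_n1 |]; try lia.
  rewrite e2 (dl_ne n) ?(dl_ne n.-1) ?(@dl_ne a.-1) ?dl_eq ?shnA; try lia.
  rewrite e5.
  have -> : (2 + n = n.+2)%N by lia.
  by rewrite oppr0 !add0r !addr0 addNr.
Qed.


Section Hi.
Hypothesis Hhi : (a = n - 1)%N \/ a = n.

Let f1 : n.-1.+1 = n. Proof. lia. Qed.
Let f2 : n.-1.+2 = n.+1. Proof. lia. Qed.
Let f3 : (2 + n.-1 = n.+1)%N. Proof. lia. Qed.

Lemma Aroot_hi u : Aroot n q qi a (shn u n.-1 + 1) =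
  phi (y a (shn u n.-1) * y a (shn u n.+1) * yi (n - 2)%N (shn u n)).
Proof. by rewrite Aroot_iii // shn_add1 shn_sub1 shn_add1 f2 f1. Qed.

Lemma dn1_shift u : s (shn u n.+1) = s (shn u n.-1 + 2).
Proof. by rewrite shn_add2 f2. Qed.

End Hi.

Lemma dl_eqE b v : b = a -> dl b v = s v.
Proof. by move=> ->; rewrite dl_eq. Qed.

Lemma block_iii : a = (n - 1)%N ->
  [/\ killed (smul (sfac2 (zbD n y yi n.-1)) (sfac2 (zbD n y yi n))),
      killed (smul (sfac2 (zD n y yi n)) (sfac2 (zD n y yi n.-1))) &
      killed (sgeom4 (fun u => zD n y yi n u * zbD n y yi n (shn u 2)))].
Proof.
move=> Ha1; have Hhi : (a = n - 1)%N \/ a = n by left.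
have ea : n.-1 = a by lia.
have hn2 : (n - 2)%N != a by lia.
have hn : n != a by lia.
have e3 : (2 + n.-1 = n.+1)%N by lia.
have M1 : forall u, y n.-1 (shn u n.-1) * y n.-1 (shn u n.+1) * yi (n - 2)%N (shn u n) =
   y a (shn u n.-1) * y a (shn u n.+1) * yi (n - 2)%N (shn u n) by move=> u; rewrite ea.
split.
- apply: killed_pair => u.
  + apply: (@sum_cancel _ _ _ _ (shn u n.-1)
       (y n.-1 (shn u n.-1) * y n.-1 (shn u n.+1) * yi (n - 2)%N (shn u n))).
    * exact: SL_zbD_n1.
    * exact: SL_zbD_n.
    * by rewrite (dl_ne _ _ hn2) (dl_ne _ _ hn) (dl_eqE _ _ ea) (dn1_shift Hhi) oppr0 !add0r.
    * by rewrite (dl_ne _ _ hn) (dl_eqE _ _ ea) oppr0 addr0.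
    * by rewrite M1; exact: Aroot_hi.
    * rewrite zbD_n1 zbD_n (Yv_y (n - 2)%N) ?(Yiv_yi n) ?(Yiv_yi n.-1) ?(Yv_y n.-1); try lia.
      transitivity (y n.-1 (shn u n.-1) * yi n (shn u n.+1) *
         (y (n - 2)%N (shn u n) * yi (n - 2)%N (shn u n)) * (y n.-1 (shn u n.+1) * yi n.-1 (shn u n.+1))).
        ring.
      by rewrite !Hy ?mulr1 //; lia.
  + apply: prod_cancel; [apply: SL_zbD_n1 | apply: SL_zbD_n |].
    rewrite (dl_ne _ _ hn2) !(dl_ne _ _ hn) !(dl_eqE _ _ ea) !shnA e3.
    by rewrite oppr0 !add0r !addr0 addNr.
- apply: killed_pair => u.
  + apply: (@sum_cancel _ _ _ _ (shn u n.-1)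
       (y n.-1 (shn u n.-1) * y n.-1 (shn u n.+1) * yi (n - 2)%N (shn u n))).
    * exact: SL_zD_n.
    * exact: SL_zD_n1.
    * by rewrite (dl_ne _ _ hn) (dl_eqE _ _ ea) (dn1_shift Hhi) add0r.
    * by rewrite (dl_ne _ _ hn2) (dl_ne _ _ hn) (dl_eqE _ _ ea) oppr0 addr0 add0r.
    * by rewrite M1; exact: Aroot_hi.
    * rewrite zD_n1 zD_n (Yv_y n) ?(Yiv_yi (n - 2)%N) ?(Yiv_yi n.-1) ?(Yv_y n.-1); try lia.
      transitivity (y n (shn u n.-1) * y n.-1 (shn u n.-1) * yi (n - 2)%N (shn u n) *
         (y n.-1 (shn u n.+1) * yi n.-1 (shn u n.+1))).
        ring.
      by rewrite !Hy ?mulr1 //; lia.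
  + apply: prod_cancel; [apply: SL_zD_n | apply: SL_zD_n1 |].
    rewrite (dl_ne _ _ hn2) !(dl_ne _ _ hn) !(dl_eqE _ _ ea) !shnA e3.
    by rewrite oppr0 !add0r !addr0 addNr.
- apply: killed_sgeom4 => u.
  apply: prod_cancel; [apply: SL_zD_n | apply: SL_zbD_n |].
  rewrite !(dl_ne _ _ hn) !(dl_eqE _ _ ea) !shnA e3.
  by rewrite oppr0 !add0r !addr0 addNr.
Qed.

Lemma block_iv : a = n ->
  [/\ killed (smul (sfac2 (zbD n y yi n.-1)) (sfac2 (zD n y yi n))),
      killed (smul (sfac2 (zbD n y yi n)) (sfac2 (zD n y yi n.-1))) &
      killed (sgeom4 (fun u => zbD n y yi n u * zD n y yi n (shn u 2)))].
Proof.
move=> Ha1; have Hhi : (a = n - 1)%N \/ a = n by right.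
have ea : n = a by lia.
have hn2 : (n - 2)%N != a by lia.
have hn : n.-1 != a by lia.
have e3 : (2 + n.-1 = n.+1)%N by lia.
have M1 : forall u, y n (shn u n.-1) * y n (shn u n.+1) * yi (n - 2)%N (shn u n) =
   y a (shn u n.-1) * y a (shn u n.+1) * yi (n - 2)%N (shn u n) by move=> u; rewrite -ea.
split.
- apply: killed_pair => u.
  + apply: (@sum_cancel _ _ _ _ (shn u n.-1)
       (y n (shn u n.-1) * y n (shn u n.+1) * yi (n - 2)%N (shn u n))).
    * exact: SL_zbD_n1.
    * exact: SL_zD_n.
    * by rewrite (dl_ne _ _ hn2) (dl_ne _ _ hn) (dl_eqE _ _ ea) (dn1_shift Hhi) oppr0 add0r addr0.
    * by rewrite (dl_ne _ _ hn) (dl_eqE _ _ ea) oppr0 addr0.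
    * by rewrite M1; exact: Aroot_hi.
    * rewrite zbD_n1 zD_n (Yv_y (n - 2)%N) ?(Yiv_yi n) ?(Yiv_yi n.-1) ?(Yv_y n); try lia.
      transitivity (y n (shn u n.-1) * yi n.-1 (shn u n.+1) *
         (y (n - 2)%N (shn u n) * yi (n - 2)%N (shn u n)) * (y n (shn u n.+1) * yi n (shn u n.+1))).
        ring.
      by rewrite !Hy ?mulr1 //; lia.
  + apply: prod_cancel; [apply: SL_zbD_n1 | apply: SL_zD_n |].
    rewrite (dl_ne _ _ hn2) !(dl_ne _ _ hn) !(dl_eqE _ _ ea) !shnA e3.
    by rewrite oppr0 !add0r !addr0 addNr.
- apply: killed_pair => u.
  + apply: (@sum_cancel _ _ _ _ (shn u n.-1)
       (y n (shn u n.-1) * y n (shn u n.+1) * yi (n - 2)%N (shn u n))).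
    * exact: SL_zbD_n.
    * exact: SL_zD_n1.
    * by rewrite (dl_ne _ _ hn) (dl_eqE _ _ ea) (dn1_shift Hhi) add0r.
    * by rewrite (dl_ne _ _ hn2) (dl_ne _ _ hn) (dl_eqE _ _ ea) oppr0 !addr0.
    * by rewrite M1; exact: Aroot_hi.
    * rewrite zD_n1 zbD_n (Yv_y n) ?(Yiv_yi (n - 2)%N) ?(Yiv_yi n) ?(Yv_y n.-1); try lia.
      transitivity (y n (shn u n.-1) * y n.-1 (shn u n.-1) * yi (n - 2)%N (shn u n) *
         (y n (shn u n.+1) * yi n (shn u n.+1))).
        ring.
      by rewrite !Hy ?mulr1 //; lia.
  + apply: prod_cancel; [apply: SL_zbD_n | apply: SL_zD_n1 |].
    rewrite (dl_ne _ _ hn2) !(dl_ne _ _ hn) !(dl_eqE _ _ ea) !shnA e3.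
    by rewrite oppr0 !add0r !addr0 addNr.
- apply: killed_sgeom4 => u.
  apply: prod_cancel; [apply: SL_zbD_n | apply: SL_zD_n |].
  rewrite !(dl_ne _ _ hn) !(dl_eqE _ _ ea) !shnA e3.
  by rewrite oppr0 !add0r !addr0 addNr.
Qed.


Lemma Sa_zD_lo0 b u : (1 <= b)%N -> (b <= n - 2)%N -> b != a -> b.-1 != a ->
  Sa (zD n y yi b u) = 0.
Proof.
move=> H1 H2 H3 H4; apply: SL0; eapply SL_ext; last exact: (SL_zD_lo b u H1 H2).
by rewrite (dl_ne _ _ H3) (dl_ne _ _ H4) oppr0 addr0.
Qed.
Lemma Sa_zD_n10 u : (a <= n - 3)%N -> Sa (zD n y yi n.-1 u) = 0.
Proof.
move=> H; apply: SL0; eapply SL_ext; last exact: (SL_zD_n1 u).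
by rewrite !dl_ne ?oppr0 ?addr0 //; lia.
Qed.
Lemma Sa_zD_n0 u : (a <= n - 2)%N -> Sa (zD n y yi n u) = 0.
Proof.
move=> H; apply: SL0; eapply SL_ext; last exact: (SL_zD_n u).
by rewrite !dl_ne ?oppr0 ?addr0 //; lia.
Qed.
Lemma Sa_zbD_lo0 b u : (1 <= b)%N -> (b <= n - 2)%N -> b != a -> b.-1 != a ->
  Sa (zbD n y yi b u) = 0.
Proof.
move=> H1 H2 H3 H4; apply: SL0; eapply SL_ext; last exact: (SL_zbD_lo b u H1 H2).
by rewrite (dl_ne _ _ H3) (dl_ne _ _ H4) oppr0 addr0.
Qed.
Lemma Sa_zbD_n10 u : (a <= n - 3)%N -> Sa (zbD n y yi n.-1 u) = 0.
Proof.
move=> H; apply: SL0; eapply SL_ext; last exact: (SL_zbD_n1 u).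
by rewrite !dl_ne ?oppr0 ?addr0 //; lia.
Qed.
Lemma Sa_zbD_n0 u : (a <= n - 2)%N -> Sa (zbD n y yi n u) = 0.
Proof.
move=> H; apply: SL0; eapply SL_ext; last exact: (SL_zbD_n u).
by rewrite !dl_ne ?oppr0 ?addr0 //; lia.
Qed.

Lemma Sa_zD_far b u : (1 <= b <= n)%N ->
  ((b <= n - 2)%N -> b != a /\ b.-1 != a) ->
  (b = n.-1 -> (a <= n - 3)%N) -> (b = n -> (a <= n - 2)%N) ->
  Sa (zD n y yi b u) = 0.
Proof.
move=> Hb H1 H2 H3; have [Hl|Hl] := leqP b (n - 2).
  by have [] := H1 Hl; apply: Sa_zD_lo0; lia.
have [e|e] : b = n.-1 \/ b = n by lia.
  by rewrite e; apply: Sa_zD_n10; apply: H2.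
by rewrite e; apply: Sa_zD_n0; apply: H3.
Qed.
Lemma Sa_zbD_far b u : (1 <= b <= n)%N ->
  ((b <= n - 2)%N -> b != a /\ b.-1 != a) ->
  (b = n.-1 -> (a <= n - 3)%N) -> (b = n -> (a <= n - 2)%N) ->
  Sa (zbD n y yi b u) = 0.
Proof.
move=> Hb H1 H2 H3; have [Hl|Hl] := leqP b (n - 2).
  by have [] := H1 Hl; apply: Sa_zbD_lo0; lia.
have [e|e] : b = n.-1 \/ b = n by lia.
  by rewrite e; apply: Sa_zbD_n10; apply: H2.
by rewrite e; apply: Sa_zbD_n0; apply: H3.
Qed.


Lemma main_lo : (a <= n - 2)%N -> killed (Lseries n y yi).
Proof.
move=> Ha2.
have HH : (a <= n - 3)%N \/ a = (n - 2)%N by lia.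
have BF : killed (smul (sfac2 (zD n y yi a.+1)) (sfac2 (zD n y yi a))).
  by case: HH => H; [apply: blockF_i | apply: blockF_ii].
have BFb : killed (smul (sfac2 (zbD n y yi a)) (sfac2 (zbD n y yi a.+1))).
  by case: HH => H; [apply: blockFb_i | apply: blockFb_ii].
rewrite /Lseries /Lright /Lmid (iota_split1 n a); try lia.
rewrite rev_split !foldr_cat /=.
apply: killed_foldr.
  apply: killed_assoc => //.
  apply: killed_foldr.
    apply: killed_smul.
      apply: killed_sgeom4 => u; rewrite HSleib Sa_zD_n0 ?Sa_zbD_n0 ?mulr0 ?addr0 //.
    apply: killed_foldr.
      apply: killed_assoc => //.
      apply: killed_foldr; first exact: killed_sone.
      move=> b; rewrite mem_rev mem_iota => Hb u; apply: Sa_zD_far; lia.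
    move=> b; rewrite mem_rev mem_iota => Hb u; apply: Sa_zD_far; lia.
  move=> b; rewrite mem_iota => Hb u; apply: Sa_zbD_far; lia.
move=> b; rewrite mem_iota => Hb u; apply: Sa_zbD_far; lia.
Qed.


Lemma main_hi : (n - 1 <= a)%N -> killed (Lseries n y yi).
Proof.
move=> Ha1.
rewrite /Lseries /Lright /Lmid (iota_split2 n); last lia.
rewrite rev_split2 !foldr_cat /=.
set R1 := foldr _ (sone Yr) (rev _).
have KR1 : killed R1.
  apply: killed_foldr; first exact: killed_sone.
  move=> b; rewrite mem_rev mem_iota => Hb u; apply: Sa_zD_far; lia.
apply: killed_foldr; last first.
  move=> b; rewrite mem_iota => Hb u; apply: Sa_zbD_far; lia.
have [H|H] : a = (n - 1)%N \/ a = n by lia.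
- have [B1 B2 B3] := block_iii H.
  rewrite -(@smul_assocE _ (sfac2 (zD n y yi n)) (sfac2 (zD n y yi n.-1)) R1).
  apply: killed_assoc => //.
  by apply: killed_smul => //; apply: killed_smul.
- have [B1 B2 B3] := block_iv H.
  rewrite -(@smul_assocE _ (sgeom4 (fun u => zD n y yi n u * zbD n y yi n (shn u 2)))
              (sfac2 (zD n y yi n)) (smul (sfac2 (zD n y yi n.-1)) R1)).
  rewrite -(@smul_assocE _ (sfac2 (zbD n y yi n))
     (smul (sgeom4 (fun u => zD n y yi n u * zbD n y yi n (shn u 2))) (sfac2 (zD n y yi n)))
     (smul (sfac2 (zD n y yi n.-1)) R1)).
  rewrite (@swap_midE _ (zD n y yi n) (zbD n y yi n)).
  rewrite !smul_assocE -(@smul_assocE _ (sfac2 (zbD n y yi n)) (sfac2 (zD n y yi n.-1)) R1).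
  apply: killed_assoc => //.
  by apply: killed_smul => //; apply: killed_smul.
Qed.

Lemma main_sec u j : Sa (Lseries n y yi j u) = 0.
Proof.
have [H|H] : (a <= n - 2)%N \/ (n - 1 <= a)%N by lia.
  exact: main_lo.
exact: main_hi.
Qed.

End Main.

Theorem mainTheorem12
  (n : nat) (Hn : (4 <= n)%N)
  (* a ring playing the role of  Y = Z[Y_b(v)^{+-1}], with the Y_b(v) and
     their inverses *)
  (Yr : comNzRingType) (y yi : nat -> CC -> Yr)
  (Hy : forall b v, (1 <= b <= n)%N -> y b v * yi b v = 1)
  (* a ring playing the role of S, with the images of Q_b(v)^{+-1} *)
  (T : comNzRingType) (q qi : nat -> CC -> T)
  (Hq : forall b v, (1 <= b <= n)%N -> q b v * qi b v = 1)
  (* the inclusion Y -> S, Y_b(v) = Q_b(v-1)/Q_b(v+1) *)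
  (phi : {rmorphism Yr -> T})
  (Hphi : forall b v, (1 <= b <= n)%N -> phi (y b v) = q b (v - 1) * qi b (v + 1))
  (a : nat) (Ha : (1 <= a <= n)%N)
  (* the symbols S_a(v), subject to S_a(v+2) = A_a(v+1) S_a(v) *)
  (s : CC -> T)
  (Hs : forall v, s (v + 2) = Aroot n q qi a (v + 1) * s v)
  (* the screening operator S_a : additive, Leibniz, S_a Y_b(v) = delta_ab Y_b(v) S_a(v) *)
  (Sa : Yr -> T)
  (HSadd : forall x x', Sa (x + x') = Sa x + Sa x')
  (HSleib : forall x x', Sa (x * x') = phi x * Sa x' + phi x' * Sa x)
  (HSgen : forall b v, (1 <= b <= n)%N ->
     Sa (y b v) = if b == a then phi (y b v) * s v else 0) :
  forall (u : CC) (j : nat), Sa (Lseries n y yi j u) = 0.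
Proof.
move=> u j.
exact: (@main_sec n Hn Yr y yi Hy T q qi Hq phi Hphi a Ha s Hs Sa HSadd HSleib HSgen u j).
Qed.
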